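(* Let $N\ge1$, let $M=\prod_{i=1}^N M_i\subset\mathbb{R}^N$ be compact (each $M_i\subset\mathbb{R}$), and suppose $M\subset U=\prod_{i=1}^N U_i\subset\mathbb{C}^N$ with each $U_i$ an open domain of $\mathbb{C}$ symmetric about the real axis. Let $f:M\to\mathbb{R}$ be continuous. Then for every $\varepsilon>0$ there exist an integer $h\ge1$ and a CauchyNet $N_{\boldsymbol\theta,h}$ of hidden width $h$, with parameters $\boldsymbol\theta=(\mathbf{B},\mathbf{c})$, $\mathbf{B}\in\mathbb{C}^{h\times N}$, $\mathbf{c}\in\mathbb{C}^h$, such that $|f(\mathbf{x})-N_{\boldsymbol\theta,h}(\mathbf{x})|<\varepsilon$ for all $\mathbf{x}=(x_1,\dots,x_N)^{\mathrm T}\in M$.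
   Context: A CauchyNet with hidden width $h$ and parameters $\mathbf{B}=(b_{k,i})\in\mathbb{C}^{h\times N}$, $\mathbf{c}=(c_1,\dots,c_h)\in\mathbb{C}^h$ is the (complex-valued) function on $M$ given by $N_{\boldsymbol\theta,h}(\mathbf{x})=\sum_{k=1}^{h}c_k\prod_{i=1}^{N}(b_{k,i}-x_i)^{-1}$, where the parameters are such that no factor $b_{k,i}-x_i$ vanishes on $M$. (In the architecture each hidden neuron computes the Cauchy activation $\prod_i z_i^{-1}$ of the complex-shifted input, and the output is the $\mathbf{c}$-weighted sum of the hidden activations.) *)

(* Defs.v *)
From HB Require Import structures.
From mathcomp Require Import all_boot all_order all_algebra.
From mathcomp Require Import all_classical all_reals all_analysis.
From mathcomp Require Import complex.
Set Implicit Arguments. Unset Strict Implicit. Unset Printing Implicit Defensive.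
Import Order.TTheory GRing.Theory Num.Theory.
Import numFieldTopology.Exports numFieldNormedType.Exports.
Local Open Scope classical_set_scope.
Local Open Scope ring_scope.

(* The complex plane C = R[i], viewed as a normed (hence topological) space
   with its Euclidean modulus topology (through the regular algebra R[i]^o). *)
Notation Cplx R := ((R[i])^o) (only parsing).

Definition prodset (R : realType) (N : nat) (Mi : 'I_N -> set R) : set 'rV[R]_N :=
  [set x | forall i : 'I_N, Mi i (x ord0 i)].

Definition cauchynet (R : realType) (N h : nat)
    (B : 'M[R[i]]_(h, N)) (c : 'I_h -> R[i]) (x : 'rV[R]_N) : R[i] :=
  \sum_(k < h) c k * \prod_(i < N) (B k i - ((x ord0 i)%:C)%C)^-1.

(* Main.v *)
Require Import Defs.
From HB Require Import structures.
From mathcomp Require Import all_boot all_order all_algebra.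
From mathcomp Require Import all_classical all_reals all_analysis.
From mathcomp Require Import complex.
From mathcomp Require Import ring lra.
Import Order.TTheory GRing.Theory Num.Theory.
Import numFieldTopology.Exports numFieldNormedType.Exports.
Local Open Scope classical_set_scope.
Local Open Scope ring_scope.

Section Bern.
Variable R : realFieldType.
Definition bern (n k : nat) (u : R) : R := 'C(n,k)%:R * u ^+ k * (1 - u) ^+ (n - k).

Lemma bern_ge0 n k u : 0 <= u <= 1 -> 0 <= bern n k u.
Proof.
move=> /andP[u0 u1]; rewrite /bern; apply: mulr_ge0; first apply: mulr_ge0 => //.
- exact: exprn_ge0.
- by apply: exprn_ge0; rewrite subr_ge0.
Qed.

Lemma bern_sum1 n u : \sum_(k < n.+1) bern n k u = 1.
Proof.
have := exprDn (1 - u) u n; rewrite subrK expr1n => ->.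
by apply: eq_bigr => k _; rewrite /bern -mulr_natr; ring.
Qed.

Lemma bern_shift m j u : (j.+1)%:R * bern m.+1 j.+1 u = (m.+1)%:R * u * bern m j u.
Proof.
have := congr1 (GRing.natmul (1:R)) (mul_bin_diag m.+1 j); rewrite !natrM /= => e.
by rewrite /bern subSS !mulrA -e exprS; ring.
Qed.

Lemma bern_sumk n u : \sum_(k < n.+1) k%:R * bern n k u = n%:R * u.
Proof.
case: n => [|m]; first by rewrite big_ord_recl big_ord0 /= !mul0r addr0.
rewrite big_ord_recl /= mul0r add0r.
under eq_bigr => j _ do rewrite /bump /= add1n bern_shift.
by rewrite -mulr_sumr bern_sum1 mulr1.
Qed.

Lemma bern_sumkk n u : \sum_(k < n.+1) (k%:R * (k%:R - 1)) * bern n k u = n%:R * (n%:R - 1) * u ^+ 2.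
Proof.
case: n => [|m]; first by rewrite big_ord_recl big_ord0 /= !mul0r addr0.
rewrite big_ord_recl /= !mul0r add0r.
under eq_bigr => j _ do rewrite /bump /= add1n mulrC mulrA (mulrC _ (j.+1)%:R) bern_shift.
have -> : \sum_(i < m.+1) (m.+1)%:R * u * bern m i u * (i.+1%:R - 1)
   = (m.+1)%:R * u * \sum_(i < m.+1) i%:R * bern m i u.
  rewrite mulr_sumr; apply: eq_bigr => i _; rewrite -[(i : nat).+1]addn1 natrD addrK; ring.
rewrite bern_sumk -[m.+1]addn1 natrD addrK; ring.
Qed.

Lemma bern_var n u : \sum_(k < n.+1) (k%:R - n%:R * u) ^+ 2 * bern n k u = n%:R * u * (1 - u).
Proof.
have -> : \sum_(k < n.+1) (k%:R - n%:R * u) ^+ 2 * bern n k u =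
  \sum_(k < n.+1) (k%:R * (k%:R - 1)) * bern n k u + (1 - 2 * n%:R * u) * \sum_(k < n.+1) k%:R * bern n k u
  + (n%:R * u) ^+ 2 * \sum_(k < n.+1) bern n k u.
  rewrite !mulr_sumr -!big_split /=; apply: eq_bigr => k _; ring.
rewrite bern_sumkk bern_sumk bern_sum1; ring.
Qed.

Lemma bern_far n (u eta : R) : 0 <= u <= 1 -> 0 < eta -> (0 < n)%N ->
  \sum_(k < n.+1 | eta <= `|k%:R / n%:R - u|) bern n k u <= (4 * n%:R * eta ^+ 2)^-1.
Proof.
move=> u01 eta0 n0.
have n0' : 0 < n%:R :> R by rewrite ltr0n.
apply: (le_trans (y := \sum_(k < n.+1) (k%:R - n%:R * u) ^+ 2 / (n%:R ^+ 2 * eta ^+ 2) * bern n k u)).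
  rewrite [X in _ <= X](bigID (fun k : 'I_n.+1 => eta <= `|k%:R / n%:R - u|)) /=.
  rewrite -[X in X <= _]addr0; apply: lerD; last first.
    apply: sumr_ge0 => k _; apply: mulr_ge0; last exact: bern_ge0.
    apply: divr_ge0; [exact: sqr_ge0|]. by apply: mulr_ge0; apply: sqr_ge0.
  apply: ler_sum => k Hk; rewrite -[X in X <= _]mul1r; apply: ler_wpM2r; first exact: bern_ge0.
  rewrite ler_pdivlMr; last by apply: mulr_gt0; apply: exprn_gt0.
  rewrite mul1r.
  have nn0 : n%:R != 0 :> R by rewrite gt_eqF.
  have -> : k%:R - n%:R * u = n%:R * (k%:R / n%:R - u).
    by rewrite mulrBr mulrCA divff // mulr1.
  rewrite exprMn; apply: ler_wpM2l; first exact: sqr_ge0.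
  rewrite -[(_ - u) ^+ 2]real_normK ?num_real //; apply: lerXn2r => //; rewrite nnegrE ?normr_ge0 // ltW //.
rewrite -(big_mkcond (fun k => true)) /=. 
under eq_bigr => k _ do rewrite mulrAC.
rewrite -mulr_suml bern_var.
rewrite -[X in _ <= X]mul1r ler_pdivrMr; last by apply: mulr_gt0; [apply: mulr_gt0|apply: exprn_gt0].
move: u01 => /andP[u0 u1].
have -> : 1 / (4 * n%:R * eta ^+ 2) * (n%:R ^+ 2 * eta ^+ 2) = n%:R / 4.
  field; rewrite ?gt_eqF ?(exprn_gt0) //; apply: mulr_gt0 => //; exact: exprn_gt0.
have h : u * (1 - u) <= 1 / 4.
  rewrite ler_pdivlMr //; have := sqr_ge0 (2 * u - 1); nra.
rewrite -mulrA; rewrite -[X in _ <= X]mulr1 mulrA -[X in _ <= X]mulrA. 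
by rewrite -mulrA; apply: ler_wpM2l; [exact: ltW| rewrite mulr1; rewrite mul1r in h].
Qed.
End Bern.
Arguments bern {R}.

Notation toC a := ((a)%:C)%C.

Section Cplx.
Variable R : rcfType.

Lemma toCM (a b : R) : toC (a * b) = toC a * toC b.
Proof. exact: rmorphM. Qed.

Lemma normC_real (a : R) : `|toC a| = toC `|a|.
Proof. by rewrite normc_def /= expr0n /= addr0 sqrtr_sqr. Qed.

Lemma Im_le_norm (z : R[i]) : toC (complex.Im z) <= `|z|.
Proof.
rewrite normc_def lecR; apply: (le_trans (ler_norm _)).
rewrite -sqrtr_sqr ler_sqrt; last by apply: addr_ge0; apply: sqr_ge0.
by rewrite lerDr sqr_ge0.
Qed.

Lemma norm_sub_ge (b : R[i]) (x : R) : toC (complex.Im b) <= `|b - toC x|.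
Proof.
have -> : complex.Im b = complex.Im (b - toC x) by case: b => b1 b2 /=; rewrite oppr0 addr0.
exact: Im_le_norm.
Qed.

Lemma sub_neq0 (b : R[i]) (x : R) : 0 < complex.Im b -> b - toC x != 0.
Proof.
move=> hb; rewrite -normr_gt0; apply: lt_le_trans (norm_sub_ge b x).
by rewrite ltcR.
Qed.

Lemma norm_inv_le (b : R[i]) (x : R) : 0 < complex.Im b ->
  `|(b - toC x)^-1| <= toC ((complex.Im b)^-1).
Proof.
move=> hb; rewrite normfV fmorphV /=.
rewrite lef_pV2; [exact: norm_sub_ge | by rewrite posrE normr_gt0 sub_neq0 | by rewrite posrE ltcR].
Qed.

Lemma norm_one_sub (T x : R) : 0 < T ->
  `|1 - (Complex 0 T) * ((Complex 0 T) - toC x)^-1| <= toC (`|x| / T).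
Proof.
move=> T0.
have nz : (Complex 0 T) - toC x != 0 by apply: sub_neq0.
have -> : 1 - (Complex 0 T) * ((Complex 0 T) - toC x)^-1 = - toC x * ((Complex 0 T) - toC x)^-1.
  by field.
rewrite normrM normrN normC_real rmorphM /=.
apply: ler_wpM2l; first by rewrite lecR.
exact: (norm_inv_le (Complex 0 T) x).
Qed.
End Cplx.

Section Approx.
Variable R : rcfType.
Variable N : nat.
Variable M : 'rV[R]_N -> Prop.
Variable K : R.
Hypothesis K0 : 0 < K.
Hypothesis HK : forall x, M x -> forall i, `|x ord0 i| <= K.

Definition term := (R[i] * ('I_N -> R[i]))%type.
Definition tval (t : term) (x : 'rV[R]_N) : R[i] :=
  t.1 * \prod_(i < N) (t.2 i - toC (x ord0 i))^-1.
Definition evals (s : seq term) x := \sum_(t <- s) tval t x.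
Definition validt (t : term) := forall i, 0 < complex.Im (t.2 i).
Definition valid (s : seq term) := forall t, List.In t s -> validt t.
Definition approx (g : 'rV[R]_N -> R[i]) := forall e : R, 0 < e ->
  exists s, valid s /\ forall x, M x -> `|g x - evals s x| < toC e.

Lemma approx_ext g g' : (forall x, M x -> g x = g' x) -> approx g -> approx g'.
Proof.
move=> eg ag e e0; have [s [vs hs]] := ag e e0; exists s; split => // x Mx.
by rewrite -eg //; apply: hs.
Qed.

Arguments approx_ext {g g'}.

Lemma approx0 : approx (fun _ => 0).
Proof.
move=> e e0; exists [::]; split => // x Mx.
by rewrite /evals big_nil subr0 normr0 ltcR.
Qed.

Lemma approxD g1 g2 : approx g1 -> approx g2 -> approx (fun x => g1 x + g2 x).
Proof.
move=> a1 a2 e e0.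
have e2 : 0 < e / 2 by rewrite divr_gt0.
have [s1 [v1 h1]] := a1 _ e2; have [s2 [v2 h2]] := a2 _ e2.
exists (s1 ++ s2); split.
  by move=> t /List.in_app_iff [] ?; [apply: v1 | apply: v2].
move=> x Mx; rewrite /evals big_cat /=.
have -> : g1 x + g2 x - (\sum_(t <- s1) tval t x + \sum_(t <- s2) tval t x)
  = (g1 x - evals s1 x) + (g2 x - evals s2 x) by rewrite /evals; ring.
apply: le_lt_trans (ler_normD _ _) _.
have -> : e = e / 2 + e / 2 by field.
by rewrite rmorphD; apply: ltrD; [apply: h1 | apply: h2].
Qed.

Arguments approxD {g1 g2}.

Lemma normCE (a : R[i]) : `|a| = toC (Normc.normc a).
Proof. by []. Qed.

Lemma approxZ (a : R[i]) g : approx g -> approx (fun x => a * g x).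
Proof.
move=> ag e e0.
set na := Normc.normc a.
have na0 : 0 <= na by rewrite /na; case: (a) => a1 a2 /=; exact: sqrtr_ge0.
have e1 : 0 < e / (na + 1) by apply: divr_gt0 => //; apply: ltr_wpDl.
have [s [vs hs]] := ag _ e1.
exists (map (fun t : term => (a * t.1, t.2)) s); split.
  move=> t /List.in_map_iff [t' [<- Ht']] i /=; exact: vs Ht' i.
move=> x Mx.
have -> : evals (map (fun t : term => (a * t.1, t.2)) s) x = a * evals s x.
  rewrite /evals big_map mulr_sumr; apply: eq_bigr => t _; by rewrite /tval /= mulrA.
rewrite -mulrBr normrM.
have h1 : `|a| * `|g x - evals s x| <= `|a| * toC (e / (na + 1)).
  by apply: ler_wpM2l => //; apply: ltW; apply: hs.
apply: le_lt_trans h1 _.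
rewrite normCE -rmorphM ltcR.
rewrite mulrA ltr_pdivrMr; last by apply: ltr_wpDl.
rewrite -/na; nra.
Qed.

Arguments approxZ a {g}.

Lemma approx_lim g : (forall e : R, 0 < e -> exists g', approx g' /\ forall x, M x -> `|g x - g' x| < toC e) ->
  approx g.
Proof.
move=> H e e0.
have e2 : 0 < e / 2 by rewrite divr_gt0.
have [g' [ag' hg']] := H _ e2.
have [s [vs hs]] := ag' _ e2.
exists s; split => // x Mx.
have -> : g x - evals s x = (g x - g' x) + (g' x - evals s x) by ring.
apply: le_lt_trans (ler_normD _ _) _.
have -> : e = e / 2 + e / 2 by field.
by rewrite rmorphD; apply: ltrD; [apply: hg' | apply: hs].
Qed.

Lemma approx_sum (I : Type) (r : seq I) (F : I -> 'rV[R]_N -> R[i]) :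
  (forall i, List.In i r -> approx (F i)) -> approx (fun x => \sum_(i <- r) F i x).
Proof.
elim: r => [|i r IH] H.
  by apply: (approx_ext _ approx0) => x _; rewrite big_nil.
have := approxD (H i (or_introl erefl)) (IH (fun j hj => H j (or_intror hj))).
by apply: approx_ext => x _; rewrite big_cons.
Qed.


Lemma approx_drop (r : seq 'I_N) (b : 'I_N -> R[i]) : (forall i, 0 < complex.Im (b i)) ->
  approx (fun x => \prod_(i < N | i \notin r) (b i - toC (x ord0 i))^-1).
Proof.
elim: r b => [|j r IH] b vb.
  move=> e e0; exists [:: (1, b)]; split.
    by move=> t [<-|[]].
  move=> x Mx; rewrite /evals big_seq1 /tval /= mul1r.
  have -> : \prod_(i < N | i \notin [::]) (b i - toC (x ord0 i))^-1 = \prod_(i < N) (b i - toC (x ord0 i))^-1.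
    by apply: eq_bigl => i; rewrite in_nil.
  by rewrite subrr normr0 ltcR.
case jr: (j \in r).
  have := IH b vb; apply: approx_ext => x _; apply: eq_bigl => i.
  by rewrite in_cons; case: (i =P j) => [->|_]; rewrite ?jr.
apply: approx_lim => e e0.
set P := \prod_(i < N | i \notin j :: r) (complex.Im (b i))^-1.
have P0 : 0 < P by apply: prodr_gt0 => i _; rewrite invr_gt0.
set T := K * P / e + 1.
have T0 : 0 < T by rewrite /T; apply: ltr_wpDl => //; apply: divr_ge0; [apply: mulr_ge0; apply: ltW | apply: ltW].
set b' := fun i => if i == j then Complex 0 T else b i.
have vb' : forall i, 0 < complex.Im (b' i) by move=> i; rewrite /b'; case: (i == j).
exists (fun x => Complex 0 T * \prod_(i < N | i \notin r) (b' i - toC (x ord0 i))^-1).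
split; first exact: approxZ (IH b' vb').
move=> x Mx.
rewrite [X in _ - _ * X](bigD1 j) /=; last by rewrite jr.
rewrite {1}/b' eqxx.
have -> : \prod_(i < N | (i \notin r) && (i != j)) (b' i - toC (x ord0 i))^-1 = \prod_(i < N | i \notin j :: r) (b i - toC (x ord0 i))^-1.
  apply: eq_big => i; first by rewrite in_cons negb_or andbC.
  by move=> /andP[_ ij]; rewrite /b' (negbTE ij).
set Q := \prod_(i < N | i \notin j :: r) _.
have -> : Q - Complex 0 T * ((Complex 0 T - toC (x ord0 j))^-1 * Q) = (1 - Complex 0 T * (Complex 0 T - toC (x ord0 j))^-1) * Q by ring.
rewrite normrM.
have hQ : `|Q| <= toC P.
  rewrite /Q /P normr_prod rmorph_prod; apply: ler_prod => i _.
  by rewrite normr_ge0 /=; apply: norm_inv_le.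
have h1 := @norm_one_sub R T (x ord0 j) T0.
apply: le_lt_trans (ler_pM (normr_ge0 _) (normr_ge0 _) h1 hQ) _.
rewrite -rmorphM ltcR.
have hx := HK x Mx j.
have h2 : `|x ord0 j| / T * P <= K / T * P.
  by apply: ler_wpM2r; [exact: ltW | apply: ler_wpM2r => //; rewrite invr_ge0 ltW].
apply: le_lt_trans h2 _.
rewrite mulrAC ltr_pdivrMr // /T mulrDr mulr1 mulrCA divff ?gt_eqF // mulr1.
by rewrite ltrDl.
Qed.

Lemma approx_term_mulx (t : term) j : validt t -> approx (fun x => toC (x ord0 j) * tval t x).
Proof.
move=> vt.
have E : forall x : 'rV[R]_N, toC (x ord0 j) * tval t x =
   t.1 * t.2 j * \prod_(i < N | i \notin [::]) (t.2 i - toC (x ord0 i))^-1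
   + (- t.1) * \prod_(i < N | i \notin [:: j]) (t.2 i - toC (x ord0 i))^-1.
  move=> x; rewrite /tval /=.
  have -> : \prod_(i < N | i \notin [::]) (t.2 i - toC (x ord0 i))^-1
     = \prod_(i < N) (t.2 i - toC (x ord0 i))^-1.
    by apply: eq_bigl => i; rewrite in_nil.
  have -> : \prod_(i < N | i \notin [:: j]) (t.2 i - toC (x ord0 i))^-1
     = \prod_(i < N | i != j) (t.2 i - toC (x ord0 i))^-1.
    by apply: eq_bigl => i; rewrite mem_seq1.
  rewrite (bigD1 j) //=.
  set Q := \prod_(i < N | i != j) _.
  have nz := @sub_neq0 R (t.2 j) (x ord0 j) (vt j).
  move: nz; set d := t.2 j - toC (x ord0 j) => nz.
  have -> : t.2 j = d + toC (x ord0 j) by rewrite /d subrK.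
  by field.
have := approxD (approxZ (t.1 * t.2 j) (@approx_drop [::] t.2 vt)) (approxZ (- t.1) (@approx_drop [:: j] t.2 vt)).
by apply: approx_ext => x _; rewrite E.
Qed.

Lemma approx_mulx g j : approx g -> approx (fun x => toC (x ord0 j) * g x).
Proof.
move=> ag; apply: approx_lim => e e0.
have e1 : 0 < e / (K + 1) by apply: divr_gt0 => //; apply: ltr_wpDl => //; apply: ltW.
have [s [vs hs]] := ag _ e1.
exists (fun x : 'rV[R]_N => toC (x ord0 j) * evals s x); split.
  have := @approx_sum _ s (fun t (x : 'rV[R]_N) => toC (x ord0 j) * tval t x)
    (fun t ht => @approx_term_mulx t j (vs t ht)).
  by apply: approx_ext => x _; rewrite /evals mulr_sumr.
move=> x Mx; rewrite -mulrBr normrM normC_real.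
have h1 : toC `|x ord0 j| * `|g x - evals s x| <= toC K * toC (e / (K + 1)).
  apply: ler_pM => //; first by rewrite lecR.
  - by rewrite lecR; exact: HK.
  - exact: ltW (hs x Mx).
apply: le_lt_trans h1 _.
rewrite -rmorphM ltcR mulrA ltr_pdivrMr; last by apply: ltr_wpDl => //; apply: ltW.
by rewrite mulrDr mulr1 mulrC ltrDl.
Qed.

Arguments approx_mulx {g}.

Lemma approx1 : approx (fun _ => 1).
Proof.
have := @approx_drop (enum 'I_N) (fun _ => Complex 0 1) (fun _ => ltr01).
apply: approx_ext => x _; apply: big_pred0 => i; by rewrite mem_enum.
Qed.

Lemma approx_affine g j (a c : R) : approx g -> approx (fun x => g x * toC (a + c * x ord0 j)).
Proof.
move=> ag; have := approxD (approxZ (toC a) ag) (approxZ (toC c) (approx_mulx j ag)).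
apply: approx_ext => x _; rewrite rmorphD rmorphM /=; ring.
Qed.

Arguments approx_affine {g}.

Lemma approx_affine_pow g j (a c : R) m : approx g -> approx (fun x => g x * toC ((a + c * x ord0 j) ^+ m)).
Proof.
move=> ag; elim: m => [|m IH].
  by apply: approx_ext ag => x _; rewrite expr0 rmorph1 mulr1.
have := approx_affine j a c IH.
by apply: approx_ext => x _; rewrite exprS rmorphM /=; ring.
Qed.

Arguments approx_affine_pow {g}.

Lemma approx_bern g j n k : approx g ->
  approx (fun x => g x * toC (bern n k ((x ord0 j + K) / (2 * K)))).
Proof.
move=> ag.
have := approxZ (toC ('C(n, k)%:R))
  (approx_affine_pow j (1/2) (- (1 / (2 * K))) (n - k) (approx_affine_pow j (1/2) (1 / (2 * K)) k ag)).
apply: approx_ext => x _.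
have K0' : K != 0 by rewrite gt_eqF.
have -> : bern n k ((x ord0 j + K) / (2 * K)) = 'C(n, k)%:R * ((1/2 + 1 / (2 * K) * x ord0 j) ^+ k *
   (1/2 + - (1 / (2 * K)) * x ord0 j) ^+ (n - k)).
  by rewrite /bern -mulrA; congr (_ * (_ ^+ _ * _ ^+ _)); field.
by rewrite !rmorphM /=; ring.
Qed.

Arguments approx_bern {g}.

Lemma approx_prod_bern (n : nat) (k : 'I_N -> nat) (r : seq 'I_N) :
  approx (fun x => toC (\prod_(j <- r) bern n (k j) ((x ord0 j + K) / (2 * K)))).
Proof.
elim: r => [|j r IH].
  apply: (approx_ext _ approx1) => x _.
by rewrite big_nil.
have := approx_bern j n (k j) IH.
by apply: approx_ext => x _; rewrite big_cons [RHS](@toCM R) mulrC.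
Qed.

End Approx.

Lemma cont_bounded (R : realType) (T : ptopologicalType) (A : set T) (g : T -> R) :
  compact A -> {within A, continuous g} -> exists B : R, forall x, A x -> `|g x| <= B.
Proof.
move=> cA cg.
have := compact_bounded (continuous_compact cg cA).
case=> M0 [M0r HM0].
exists (M0 + 1) => x Ax.
apply: (HM0 (M0 + 1)); first by rewrite ltrDl.
by exists x.
Qed.

Lemma unif_cont (R : realType) (N : nat) (A : set 'rV[R]_N) (f : 'rV[R]_N -> R) :
  compact A -> {within A, continuous f} -> forall e : R, 0 < e ->
  exists2 d : R, 0 < d & forall x y, A x -> A y ->
    (forall i, `|x ord0 i - y ord0 i| < d) -> `|f x - f y| < e.
Proof.
move=> cA cf e e0.
have e2 : 0 < e / 2 by rewrite divr_gt0.
have H : forall p, exists d : R, 0 < d /\ (A p -> forall y, A y -> ball p d y -> `|f p - f y| < e / 2).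
  move=> p; case: (pselect (A p)) => Ap; last by exists 1.
  have := (subspace_continuousP _ _).1 cf p Ap.
  move/cvgrPdist_lt => /(_ _ e2).
  rewrite near_withinE => /nbhs_ballP [d d0 Hd].
  exists d; split => // _ y Ay pdy.
  exact: (Hd y pdy Ay).
have [d Hd] := choice H.
move: cA; rewrite compact_cover => cA.
have op : forall p, A p -> open (ball p (d p / 2)) by move=> p _; apply: ball_open.
have cov0 : A `<=` cover A (fun p => ball p (d p / 2)).
  move=> x Ax; exists x => //; apply: ballxx.
  by rewrite divr_gt0 //; case: (Hd x).
have [D' sD' cov] := cA _ A _ op cov0.
set dd := \big[Num.min/1]_(p <- finmap.enum_fset D') (d p / 2).
have dd0 : 0 < dd.
  by apply: lt_bigmin => // p _; rewrite divr_gt0 //; case: (Hd p).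
exists dd => // x y Ax Ay hxy.
have [p Dp pdx] := cov x Ax.
have Ap : A p by apply/set_mem/sD'.
have ddp : dd <= d p / 2 by apply: ge_bigmin_seq.
have [dp0 Hp] := Hd p.
have bx : ball p (d p) x.
  apply: le_ball pdx; rewrite ler_pdivrMr //; rewrite ler_peMr //; [exact: ltW|by rewrite ler1n].
have by' : ball p (d p) y.
  split => // i j; rewrite (ord1 i).
  case: pdx => _ /(_ ord0 j) pdx'.
  move: pdx'; rewrite /ball /= => pdx'.
  have := hxy j.
  move=> hj.
  have -> : d p = d p / 2 + d p / 2 by field.
  apply: le_lt_trans (ler_distD (x ord0 j) _ _) _.
  apply: ltrD => //; apply: lt_le_trans hj ddp.
have h1 := Hp Ap x Ax bx.
have h2 := Hp Ap y Ay by'.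
have -> : e = e / 2 + e / 2 by field.
apply: le_lt_trans (ler_distD (f p) _ _) _.
by rewrite distrC; apply: ltrD.
Qed.

Definition uu (R : realType) (N : nat) (K : R) (y : 'rV[R]_N) (i : 'I_N) : R :=
  (y ord0 i + K) / (2 * K).

Arguments uu {R N}.

Section Est.
Variables (R : realType) (N : nat) (M : set 'rV[R]_N) (f : 'rV[R]_N -> R) (K F e d : R) (n : nat).
Hypothesis K0 : 0 < K.
Hypothesis HK : forall x, M x -> forall i, `|x ord0 i| <= K.
Hypothesis HF : forall x, M x -> `|f x| <= F.
Hypothesis e0 : 0 < e.
Hypothesis d0 : 0 < d.
Hypothesis uc : forall x y, M x -> M y -> (forall i, `|x ord0 i - y ord0 i| < d) -> `|f x - f y| < e / 2.
Hypothesis n0 : (0 < n)%N.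
Hypothesis hn : F * N%:R < e * n%:R * (d / (4 * K)) ^+ 2.
Variable q : {ffun 'I_N -> 'I_n.+1} -> 'rV[R]_N.
Hypothesis Hq : forall k, M (q k) /\
  ((exists y, M y /\ forall i, `|(k i)%:R / n%:R - uu K y i| < d / (4 * K)) ->
   forall i, `|(k i)%:R / n%:R - uu K (q k) i| < d / (4 * K)).

Lemma uu01 x i : M x -> 0 <= uu K x i <= 1.
Proof.
move=> Mx; have := HK x Mx i; rewrite ler_norml => /andP[h1 h2].
rewrite /uu; apply/andP; split.
  by apply: divr_ge0; [lra | apply: mulr_ge0; lra].
rewrite ler_pdivrMr; last by apply: mulr_gt0.
lra.
Qed.

Lemma est x : M x ->
  `|f x - \sum_(k : {ffun 'I_N -> 'I_n.+1}) f (q k) * \prod_(j < N) bern n (k j) (uu K x j)| < e.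
Proof.
move=> Mx.
set eta := d / (4 * K).
have eta0 : 0 < eta by rewrite divr_gt0 // mulr_gt0.
set w := fun k : {ffun 'I_N -> 'I_n.+1} => \prod_(j < N) bern n (k j) (uu K x j).
have w0 : forall k, 0 <= w k.
  by move=> k; apply: prodr_ge0 => j _; apply: bern_ge0; apply: uu01.
have wsum : \sum_k w k = 1.
  rewrite /w -(bigA_distr_bigA (fun (j : 'I_N) (m : 'I_n.+1) => bern n m (uu K x j))) /=.
  by rewrite big1 // => j _; apply: bern_sum1.
have F0 : 0 <= F by apply: le_trans (HF x Mx); apply: normr_ge0.
pose farI (i : 'I_N) (k : {ffun 'I_N -> 'I_n.+1}) := eta <= `|(k i)%:R / n%:R - uu K x i|.
pose far (k : {ffun 'I_N -> 'I_n.+1}) := [exists i, farI i k].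
have E1 : f x - \sum_k f (q k) * w k = \sum_k (f x - f (q k)) * w k.
  rewrite -[f x in LHS]mulr1 -wsum mulr_sumr -sumrB.
  by apply: eq_bigr => k _; rewrite mulrBl.
rewrite E1.
have step : forall k, `|(f x - f (q k)) * w k| <= e / 2 * w k + 2 * F * ((far k)%:R * w k).
  move=> k; rewrite normrM (ger0_norm (w0 k)).
  have [Mq Cq] := Hq k.
  case fk: (far k).
    rewrite mul1r.
    have h : `|f x - f (q k)| <= 2 * F.
      apply: le_trans (ler_normB _ _) _.
      have := HF x Mx; have := HF _ Mq; lra.
    have : 0 <= e / 2 * w k by apply: mulr_ge0 => //; apply: ltW; rewrite divr_gt0.
    have : `|f x - f (q k)| * w k <= 2 * F * w k by apply: ler_wpM2r.
    lra.
  rewrite mul0r mulr0 addr0; apply: ler_wpM2r => //; apply: ltW.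
  have Cx : forall i, `|(k i)%:R / n%:R - uu K x i| < eta.
    move=> i; move/negbT: fk => /existsPn /(_ i).
    by rewrite /farI -ltNge.
  have Cqk := Cq (ex_intro _ x (conj Mx Cx)).
  apply: uc => // i.
  have -> : x ord0 i - q k ord0 i = 2 * K * (uu K x i - uu K (q k) i).
    by rewrite /uu; field; rewrite gt_eqF.
  have hK2 : 0 <= 2 * K by apply: mulr_ge0 => //; apply: ltW.
  rewrite normrM (ger0_norm hK2).
  have h : `|uu K x i - uu K (q k) i| < 2 * eta.
    apply: le_lt_trans (ler_distD ((k i)%:R / n%:R) _ _) _.
    rewrite distrC; have := Cx i; have := Cqk i; rewrite -/eta; lra.
  have -> : d = 2 * K * (2 * eta) by rewrite /eta; field; rewrite gt_eqF.
  by rewrite ltr_pM2l //; apply: mulr_gt0.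
have farsum : \sum_k (far k)%:R * w k <= N%:R * (4 * n%:R * eta ^+ 2)^-1.
  apply: (@le_trans _ _ (\sum_k (\sum_(i < N) (farI i k)%:R) * w k)).
    apply: ler_sum => k _; apply: ler_wpM2r => //.
    case fk: (far k); last by apply: sumr_ge0 => i _; apply: ler0n.
    have [i fi] := existsP fk.
    rewrite (bigD1 i) //= fi -[X in X <= _]addr0; apply: lerD => //.
    by apply: sumr_ge0 => j _; apply: ler0n.
  under eq_bigr => k _ do rewrite mulr_suml.
  rewrite exchange_big /=.
  have -> : N%:R * (4 * n%:R * eta ^+ 2)^-1 = \sum_(i < N) (4 * n%:R * eta ^+ 2)^-1.
    by rewrite sumr_const card_ord mulr_natl.
  apply: ler_sum => i _.
  pose G (j : 'I_N) (m : 'I_n.+1) := if j == i then (eta <= `|m%:R / n%:R - uu K x j|)%R%:R * bern n m (uu K x j)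
     else bern n m (uu K x j).
  have -> : \sum_k (farI i k)%:R * w k = \sum_(k : {ffun 'I_N -> 'I_n.+1}) \prod_(j < N) G j (k j).
    apply: eq_bigr => k _; rewrite /w (bigD1 i) //= [RHS](bigD1 i) //= /G eqxx mulrA.
    congr (_ * _); apply: eq_bigr => j /negbTE ->; done.
  rewrite -(bigA_distr_bigA G) /= (bigD1 i) //=.
  rewrite [X in _ * X]big1 ?mulr1; last first.
    by move=> j ji; rewrite /G (negbTE ji) bern_sum1.
  rewrite /G eqxx.
  have -> : \sum_(m < n.+1) (eta <= `|m%:R / n%:R - uu K x i|)%R%:R * bern n m (uu K x i)
     = \sum_(m < n.+1 | eta <= `|m%:R / n%:R - uu K x i|) bern n m (uu K x i).
    rewrite [RHS]big_mkcond /=; apply: eq_bigr => m _.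
    by case: ifP => _; rewrite ?mul1r ?mul0r.
  by apply: bern_far => //; apply: uu01.
have F0' : 0 <= 2 * F by apply: mulr_ge0.
apply: le_lt_trans (ler_norm_sum _ _ _) _.
apply: le_lt_trans (ler_sum _ (fun k _ => step k)) _.
rewrite big_split /= -mulr_sumr wsum mulr1 -mulr_sumr.
apply: le_lt_trans (lerD (lexx _) (ler_wpM2l F0' farsum)) _.
have hD : 0 < n%:R * eta ^+ 2 by apply: mulr_gt0; [rewrite ltr0n | exact: exprn_gt0].
have -> : 2 * F * (N%:R * (4 * n%:R * eta ^+ 2)^-1) = (F * N%:R) / (n%:R * eta ^+ 2) / 2.
  have n0' : n%:R != 0 :> R by rewrite gt_eqF // ltr0n.
  have et0 : eta != 0 by rewrite gt_eqF.
  by field; rewrite et0 n0'.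
have : (F * N%:R) / (n%:R * eta ^+ 2) < e.
  by rewrite ltr_pdivrMr // mulrA.
lra.
Qed.
End Est.

Lemma nth_In_ssr (T : Type) (x0 : T) (s : seq T) k : (k < size s)%N -> List.In (nth x0 s k) s.
Proof.
elim: s k => [|a s IH] [|k] //= h; first by left.
by right; apply: IH.
Qed.

Theorem theorem3 (R : realType) (N : nat) (HN : (1 <= N)%N)
    (Mi : 'I_N -> set R) (U : 'I_N -> set (Cplx R))
    (HMc : compact (prodset Mi))
    (HUopen : forall i, open (U i))
    (HUconn : forall i, connected (U i))
    (HUne : forall i, U i !=set0)
    (HUsym : forall i (z : R[i]), U i z -> U i (z^*)%C)
    (HMU : forall x, prodset Mi x -> forall i, U i (((x ord0 i)%:C)%C))
    (f : 'rV[R]_N -> R) (Hf : {within prodset Mi, continuous f})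
    (eps : R) (Heps : 0 < eps) :
  exists h : nat, (1 <= h)%N /\
    exists (B : 'M[R[i]]_(h, N)) (c : 'I_h -> R[i]),
      (forall x, prodset Mi x -> forall (k : 'I_h) (i : 'I_N), B k i != ((x ord0 i)%:C)%C) /\
      (forall x, prodset Mi x -> `|((f x)%:C)%C - cauchynet B c x| < (eps%:C)%C).
Proof.
move: HMc Hf HMU; set M := prodset Mi => HMc Hf HMU.
case: (pselect (exists x, M x)) => [[x0 Mx0] | Mne]; last first.
  exists 1%N; split => //.
  exists (\matrix_(k, i) Complex 0 1), (fun _ => 0); split.
    by move=> x Mx; exfalso; apply: Mne; exists x.
  by move=> x Mx; exfalso; apply: Mne; exists x.
have Hc : forall i : 'I_N, exists B : R, forall x, M x -> `|x ord0 i| <= B.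
  move=> i; apply: (@cont_bounded R _ M (fun x : 'rV[R]_N => x ord0 i) HMc).
  apply: continuous_subspaceT; exact: coord_continuous.
have [Bc HBc] := choice Hc.
set K := \big[Num.max/0]_(i < N) Bc i + 1.
have K0 : 0 < K by rewrite /K; apply: ltr_wpDl => //; apply: bigmax_ge_id.
have HK : forall x, M x -> forall i, `|x ord0 i| <= K.
  move=> x Mx i; apply: le_trans (HBc i x Mx) _.
  have : Bc i <= \big[Num.max/0]_(j < N) Bc j by apply/bigmax_geP; right; exists i.
  rewrite /K; lra.
have [F HF] := @cont_bounded R _ M f HMc Hf.
have ap : approx R N M (fun x => toC (f x)).
  apply: approx_lim => e e0.
  have e2 : 0 < e / 2 by rewrite divr_gt0.
  have [d d0 uc] := @unif_cont R N M f HMc Hf (e / 2) e2.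
  set eta := d / (4 * K).
  have eta0 : 0 < eta by rewrite divr_gt0 // mulr_gt0.
  set n := (Num.trunc (F * N%:R / (e * eta ^+ 2))).+1.
  have n0 : (0 < n)%N by [].
  have hn : F * N%:R < e * n%:R * eta ^+ 2.
    have := truncnS_gt (F * N%:R / (e * eta ^+ 2)); rewrite -/n.
    rewrite ltr_pdivrMr; last by apply: mulr_gt0 => //; apply: exprn_gt0.
    by rewrite mulrCA mulrA.
  have Hq : forall k : {ffun 'I_N -> 'I_n.+1}, exists y, M y /\
     ((exists y', M y' /\ forall i, `|(k i)%:R / n%:R - uu K y' i| < d / (4 * K)) ->
      forall i, `|(k i)%:R / n%:R - uu K y i| < d / (4 * K)).
    move=> k; case: (pselect (exists y', M y' /\ forall i, `|(k i)%:R / n%:R - uu K y' i| < d / (4 * K))).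
      by move=> [y [My Cy]]; exists y; split.
    by move=> nC; exists x0; split => // h; exfalso; apply: nC.
  have [q Hq'] := choice Hq.
  exists (fun x => \sum_(k : {ffun 'I_N -> 'I_n.+1}) toC (f (q k)) * toC (\prod_(j < N) bern n (k j) (uu K x j))).
  split.
    apply: approx_sum => k _; apply: approxZ.
    exact: (@approx_prod_bern R N M K K0 HK n (fun j => nat_of_ord (k j)) (index_enum 'I_N)).
  move=> x Mx.
  have := @est R N M f K F e d n K0 HK HF e0 d0 uc n0 hn q Hq' x Mx.
  move=> h.
  have -> : toC (f x) - \sum_(k : {ffun 'I_N -> 'I_n.+1}) toC (f (q k)) * toC (\prod_(j < N) bern n (k j) (uu K x j))
    = toC (f x - \sum_(k : {ffun 'I_N -> 'I_n.+1}) f (q k) * \prod_(j < N) bern n (k j) (uu K x j)).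
    rewrite rmorphB rmorph_sum; congr (_ - _); apply: eq_bigr => k _.
    by rewrite [RHS](@toCM R).
  by rewrite normC_real ltcR.
have [s [vs hs]] := ap eps Heps.
pose t0 : term R N := (0, fun _ => Complex 0 1).
pose s' := t0 :: s.
have vs' : valid R N s'.
  move=> t [<-|ht]; last exact: vs.
  by move=> i /=; apply: ltr01.
exists (size s'); split => //.
exists (\matrix_(k < size s', i < N) (nth t0 s' k).2 i), (fun k => (nth t0 s' k).1).
split.
  move=> x Mx k i; rewrite mxE.
  have h := vs' _ (@nth_In_ssr _ t0 s' k (ltn_ord k)) i.
  have := @sub_neq0 R _ (x ord0 i) h.
  by apply: contra => /eqP ->; rewrite subrr.
move=> x Mx.
have -> : cauchynet (\matrix_(k < size s', i < N) (nth t0 s' k).2 i) (fun k => (nth t0 s' k).1) x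
   = evals R N s x.
  have -> : evals R N s x = evals R N s' x by rewrite /evals big_cons /tval /= mul0r add0r.
  rewrite /cauchynet /evals (big_nth t0) big_mkord; apply: eq_bigr => k _.
  by rewrite /tval; congr (_ * _); apply: eq_bigr => i _; rewrite mxE.
exact: hs x Mx.
Qed.
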